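(* There exist reduced valuation monoids $H_1$ and $H_2$ that are not isomorphic but such that $\mathcal{P}_{\mathrm{fin},1}(H_1)\simeq\mathcal{P}_{\mathrm{fin},1}(H_2)$. For instance, one may take the additively written submonoids of $(\mathbb{Z}^2,+)$ given by $H_1=(\mathbb{Z}\times\mathbb{N})\cup(\mathbb{N}_0\times\{0\})$ and $H_2=\{(x,y)\in\mathbb{Z}^2: y\le \alpha x\}$, where $\alpha>0$ is an irrational real number.
   Context: $\mathbb{N}$ denotes the positive integers and $\mathbb{N}_0$ the non-negative integers. A commutative monoid $H$ is cancellative if $ac=bc$ implies $a=b$. For a commutative cancellative monoid $H$, $\mathsf{q}(H)$ denotes its quotient group, with $H\subseteq\mathsf{q}(H)$. A commutative cancellative monoid $H$ is a valuation monoid if for every $x\in\mathsf{q}(H)$ we have $x\in H$ or $x^{-1}\in H$ (additively: $x\in H$ or $-x\in H$); it is reduced if its only invertible element is the identity. For a monoid $H$ with identity $1$, $\mathcal{P}_{\mathrm{fin},1}(H)$ is the set of all finite subsets of $H$ containing the identity, a monoid under setwise multiplication $(X,Y)\mapsto\{xy: x\in X, y\in Y\}$ (setwise addition in the additive case) with identity $\{1\}$. *)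

(* Defs.v *)
From HB Require Import structures.
From mathcomp Require Import all_boot all_order all_algebra.
From mathcomp Require Import reals.
From Stdlib Require List.
Set Implicit Arguments. Unset Strict Implicit. Unset Printing Implicit Defensive.
Import Order.TTheory GRing.Theory Num.Theory.
Local Open Scope ring_scope.

Record cmonoid := CMonoid {
  carrier :> Type;
  mop : carrier -> carrier -> carrier;
  munit : carrier;
  mopA : associative mop;
  mopC : commutative mop;
  mop1 : left_id munit mop }.

Arguments mop {c}.
Arguments munit c : clear implicits.

Definition cancellative (H : cmonoid) : Prop :=
  forall a b c : H, mop a c = mop b c -> a = b.

Definition reduced (H : cmonoid) : Prop :=
  forall u : H, (exists v : H, mop u v = munit H) -> u = munit H.

(* q(H): an abelian group G (written additively) with an injective monoid
   homomorphism f : H -> G whose image generates G (every element is a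
   quotient f a - f b); valuation: every element of q(H) or its inverse
   lies in (the image of) H. *)
Definition quotient_group_of (H : cmonoid) (G : zmodType) (f : H -> G) : Prop :=
  [/\ injective f, f (munit H) = 0,
      (forall a b : H, f (mop a b) = f a + f b) &
      (forall g : G, exists a b : H, g = f a - f b)].

Definition valuation_monoid (H : cmonoid) : Prop :=
  exists (G : zmodType) (f : H -> G), quotient_group_of f /\
    forall g : G, (exists a : H, f a = g) \/ (exists a : H, f a = - g).

Definition monoid_iso (H1 H2 : cmonoid) : Prop :=
  exists f : H1 -> H2, bijective f /\ forall a b : H1, f (mop a b) = mop (f a) (f b).

(* Subsets of H are predicates H -> Prop (compared by Leibniz equality,
   i.e. extensionally under propext/funext). *)
Definition finite_set (T : Type) (X : T -> Prop) : Prop :=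
  exists s : seq T, forall x, X x <-> List.In x s.

Definition Pfin1 (H : cmonoid) (X : H -> Prop) : Prop :=
  finite_set X /\ X (munit H).

Definition setop (H : cmonoid) (X Y : H -> Prop) : H -> Prop :=
  fun z => exists x y, [/\ X x, Y y & z = mop x y].

Definition Pfin1_iso (H1 H2 : cmonoid) : Prop :=
  exists F : (H1 -> Prop) -> (H2 -> Prop),
    [/\ (forall X, Pfin1 X -> Pfin1 (F X)),
        (forall X Y, Pfin1 X -> Pfin1 Y -> F X = F Y -> X = Y),
        (forall Y, Pfin1 Y -> exists2 X, Pfin1 X & F X = Y) &
        (forall X Y, Pfin1 X -> Pfin1 Y -> F (setop X Y) = setop (F X) (F Y))].

Definition witness_pair (H1 H2 : cmonoid) : Prop :=
  cancellative H1 /\ cancellative H2 /\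
  valuation_monoid H1 /\ valuation_monoid H2 /\
  reduced H1 /\ reduced H2 /\
  ~ monoid_iso H1 H2 /\ Pfin1_iso H1 H2.

Definition addp (p q : int * int) : int * int := (p.1 + q.1, p.2 + q.2).

Section SubZ2.
Variable P : pred (int * int).
Hypothesis P0 : P (0, 0).
Hypothesis PD : forall p q, P p -> P q -> P (addp p q).

Definition subZ2_op (a b : {p : int * int | P p}) : {p : int * int | P p} :=
  exist _ (addp (val a) (val b)) (PD (valP a) (valP b)).
Definition subZ2_unit : {p : int * int | P p} := exist _ (0, 0) P0.

Lemma subZ2_A : associative subZ2_op.
Proof. move=> a b c; apply: val_inj; rewrite /= /addp /= !addrA //. Qed.
Lemma subZ2_C : commutative subZ2_op.
Proof. move=> a b; apply: val_inj; rewrite /= /addp /= (addrC (val a).1) (addrC (val a).2) //. Qed.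
Lemma subZ2_1 : left_id subZ2_unit subZ2_op.
Proof. move=> a; apply: val_inj; rewrite /= /addp /= !add0r; by case: (val a). Qed.

Definition subZ2 : cmonoid := CMonoid subZ2_A subZ2_C subZ2_1.
End SubZ2.

Definition H1pred : pred (int * int) :=
  fun p => (0 < p.2) || ((p.2 == 0) && (0 <= p.1)).

Lemma H1pred0 : H1pred (0, 0).
Proof. by []. Qed.

Lemma H1predD p q : H1pred p -> H1pred q -> H1pred (addp p q).
Proof.
case: p q => [x1 y1] [x2 y2]; rewrite /H1pred /addp /=.
case/orP=> [h1|/andP[/eqP-> h1]]; case/orP=> [h2|/andP[/eqP-> h2]].
- by rewrite addr_gt0.
- by rewrite addr0 h1.
- by rewrite add0r h2.
- by rewrite addr0 eqxx addr_ge0 // orbT.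
Qed.

Definition H1ex : cmonoid := subZ2 H1pred0 H1predD.

Definition H2pred (R : realType) (alpha : R) : pred (int * int) :=
  fun p => p.2%:~R <= alpha * p.1%:~R.

Lemma H2pred0 (R : realType) (alpha : R) : H2pred alpha (0, 0).
Proof. by rewrite /H2pred /= mulr0 lexx. Qed.

Lemma H2predD (R : realType) (alpha : R) p q :
  H2pred alpha p -> H2pred alpha q -> H2pred alpha (addp p q).
Proof.
case: p q => [x1 y1] [x2 y2]; rewrite /H2pred /addp /= !rmorphD mulrDr => h1 h2.
exact: lerD.
Qed.

Definition H2ex (R : realType) (alpha : R) : cmonoid :=
  subZ2 (H2pred0 alpha) (@H2predD R alpha).

(* Main.v *)
Require Import Defs.
From mathcomp Require Import all_boot all_order all_algebra.
From mathcomp Require Import reals.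
From mathcomp Require Import zify ring lra.
From mathcomp Require Import Rstruct.
From mathcomp Require trigo pi_irrational.
From Stdlib Require Import FunctionalExtensionality PropExtensionality.
From Stdlib Require List.
Import Order.TTheory GRing.Theory Num.Theory.
Local Open Scope ring_scope.
Set Implicit Arguments. Unset Strict Implicit. Unset Printing Implicit Defensive.

Definition cone (P : pred (int * int)) :=
  [/\ P 0, (forall p q, P p -> P q -> P (p + q)),
      (forall g, P g \/ P (- g)) & (forall g, P g -> P (- g) -> g = 0)].

Lemma In_mem (T : eqType) (x : T) (s : seq T) : List.In x s <-> x \in s.
Proof.
elim: s => [|y s IH] //=; rewrite inE; split.
- by case=> [->|/IH ->]; rewrite ?eqxx ?orbT.
- by case/orP=> [/eqP->|/IH]; [left|right].
Qed.

Lemma pred_ext (T : Type) (X Y : T -> Prop) : (forall x, X x <-> Y x) -> X = Y.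
Proof.
move=> h; apply: functional_extensionality => x; apply: propositional_extensionality; exact: h.
Qed.

Section Cone.
Variables (P : pred (int * int)) (P0 : P (0,0)) (PD : forall p q, P p -> P q -> P (addp p q)).
Hypothesis Ptot : forall g, P g \/ P (- g).
Hypothesis Pasym : forall g, P g -> P (- g) -> g = 0.

Local Notation H := (subZ2 P0 PD).

Lemma val_mop (a b : H) : val (mop a b) = val a + val b.
Proof. by []. Qed.
Lemma val_unit : val (munit H) = 0.
Proof. by []. Qed.

Lemma cone_cancel : cancellative H.
Proof.
move=> a b c /(congr1 val); rewrite !val_mop => /addIr; exact: val_inj.
Qed.

Lemma cone_reduced : reduced H.
Proof.
move=> u [v /(congr1 val)]; rewrite val_mop val_unit => e.
apply: val_inj; rewrite val_unit; apply: Pasym; first exact: valP.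
have -> : - val u = val v by apply/eqP; rewrite eq_sym -subr_eq0 opprK addrC e.
exact: valP.
Qed.

Lemma cone_valuation : valuation_monoid H.
Proof.
exists (int * int)%type, val; split.
  split => //; first exact: val_inj.
  move=> g; case: (Ptot g) => hg.
    by exists (exist _ g hg), (munit H); rewrite val_unit subr0.
  by exists (munit H), (exist _ (- g) hg); rewrite val_unit sub0r opprK.
move=> g; case: (Ptot g) => hg; [left|right]; by exists (exist (fun p => P p) _ hg).
Qed.

End Cone.

Section Generic.
Variables (S : pred (int * int)) (S0 : S (0,0)) (SD : forall p q, S p -> S q -> S (addp p q)).
Local Notation HS := (subZ2 S0 SD).

Lemma fin_shift (S' : pred (int * int)) (X : HS -> Prop) (c : int * int) (Z : {p | S' p} -> Prop) :
  finite_set X -> (forall q, Z q <-> exists x, X x /\ val q = val x - c) -> finite_set Z.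
Proof.
case=> s hs hZ; exists (pmap insub [seq val x - c | x <- s]) => q.
rewrite hZ In_mem mem_pmap_sub; split.
- case=> x [/hs/In_mem xs ->]; exact: map_f.
- by case/mapP=> x /In_mem/hs xs ->; exists x.
Qed.

Variable O : pred (int * int).
Hypotheses (O0 : O 0) (OD : forall p q, O p -> O q -> O (p + q)).
Hypothesis Otot : forall g, O g \/ O (- g).
Hypothesis Oasym : forall g, O g -> O (- g) -> g = 0.

Definition isMin (X : HS -> Prop) (m : HS) := X m /\ forall z, X z -> O (val z - val m).

Lemma min_seq (s : seq (int * int)) : s != [::] ->
  exists2 m, m \in s & forall z, z \in s -> O (z - m).
Proof.
elim: s => [//|y s IH] _; case: s IH => [|y' s] IH.
  by exists y; rewrite ?inE ?eqxx // => z; rewrite inE => /eqP->; rewrite subrr.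
case: IH => // m ms hm; case: (Otot (y - m)) => h.
  exists m; first by rewrite inE ms orbT.
  by move=> z; rewrite inE => /orP[/eqP->|/hm].
exists y; first by rewrite inE eqxx.
move=> z; rewrite inE => /orP[/eqP->|/hm hz]; first by rewrite subrr.
have -> : z - y = (z - m) + - (y - m) by ring.
exact: OD.
Qed.

Lemma min_exists X : Pfin1 X -> exists m, isMin X m.
Proof.
case=> [[s hs] X1].
have : [seq val x | x <- s] != [::].
  by move: (proj1 (hs _) X1) => /In_mem; case: s {hs}.
case/min_seq=> m /mapP [x /In_mem/hs Xx ->] hm.
exists x; split => // z /hs/In_mem zs; have := hm (val z) (map_f _ zs); exact.
Qed.

Lemma min_unique X m m' : isMin X m -> isMin X m' -> m = m'.
Proof.
case=> Xm hm [Xm' hm']; apply: val_inj; apply/eqP; rewrite -subr_eq0; apply/eqP.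
apply: Oasym; first exact: hm'.
rewrite opprB; exact: hm.
Qed.

Lemma min_setop X Y m1 m2 : isMin X m1 -> isMin Y m2 -> isMin (setop X Y) (mop m1 m2).
Proof.
case=> X1 h1 [Y2 h2]; split; first by exists m1, m2.
move=> z [x [y [Xx Yy ->]]].
have -> : val (mop x y) - val (mop m1 m2) = (val x - val m1) + (val y - val m2).
  change (val x + val y - (val m1 + val m2) = val x - val m1 + (val y - val m2)); ring.
by apply: OD; [apply: h1 | apply: h2].
Qed.

End Generic.

Section Iso.
Variables (P : pred (int * int)) (P0 : P (0,0)) (PD : forall p q, P p -> P q -> P (addp p q)).
Hypothesis Ptot : forall g, P g \/ P (- g).
Hypothesis Pasym : forall g, P g -> P (- g) -> g = 0.
Variables (Q : pred (int * int)) (Q0 : Q (0,0)) (QD : forall p q, Q p -> Q q -> Q (addp p q)).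
Hypothesis Qtot : forall g, Q g \/ Q (- g).
Hypothesis Qasym : forall g, Q g -> Q (- g) -> g = 0.

Local Notation HP := (subZ2 P0 PD).
Local Notation HQ := (subZ2 Q0 QD).
Local Notation minQ := (@isMin P P0 PD Q).
Local Notation minP := (@isMin Q Q0 QD P).

Definition Fm (X : HP -> Prop) : HQ -> Prop :=
  fun q => exists x m, [/\ X x, minQ X m & val q = val x - val m].

Lemma minQ_ex X : Pfin1 X -> exists m, minQ X m.
Proof.  exact: (@min_exists P P0 PD Q Q0 QD Qtot). Qed.
Lemma minQ_uniq X m m' : minQ X m -> minQ X m' -> m = m'.
Proof.  exact: (@min_unique P P0 PD Q Qasym). Qed.

Lemma Fm_Pfin X : Pfin1 X -> Pfin1 (Fm X).
Proof.
move=> hX; have [m hm] := minQ_ex hX; case: (hX) => fX X1.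
split.
  apply: (fin_shift (c := val m) fX) => q; split.
    case=> x [m' [Xx hm' e]]; exists x; split => //; by rewrite e (minQ_uniq hm' hm).
  by case=> x [Xx e]; exists x, m; split.
exists m, m; split => //; first by case: hm.
by rewrite subrr.
Qed.

Lemma Fm_sub X Y mX mY : (forall q, Fm X q -> Fm Y q) -> minQ X mX -> minQ Y mY ->
  forall x, X x -> exists2 y, Y y & val x - val mX = val y - val mY.
Proof.
move=> hXY hmX hmY x Xx.
have qP : Q (val x - val mX) by case: hmX => _; apply.
have := hXY (exist (fun p => Q p) _ qP) (ex_intro _ x (ex_intro _ mX (And3 Xx hmX erefl))).
case=> y [m' [Yy hm' /= e]]; exists y => //; by rewrite e (minQ_uniq hm' hmY).
Qed.

Lemma Fm_inj X Y : Pfin1 X -> Pfin1 Y -> Fm X = Fm Y -> X = Y.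
Proof.
move=> hX hY e.
have [mX hmX] := minQ_ex hX; have [mY hmY] := minQ_ex hY.
have h1 := Fm_sub (fun q hq => eq_ind _ (fun F => F q) hq _ e) hmX hmY.
have h2 := Fm_sub (fun q hq => eq_ind _ (fun F => F q) hq _ (esym e)) hmY hmX.
have c0 : val mX - val mY = 0.
  apply: Pasym.
    have [x Xx ex] := h2 _ (proj2 hY).
    suff -> : val mX - val mY = val x by apply: valP.
    move: ex; change (0 - val mY = val x - val mX -> val mX - val mY = val x).
    move=> ex; apply/eqP; rewrite -(subrK (val mX) (val x)) -ex; apply/eqP; ring.
  have [y Yy ey] := h1 _ (proj2 hX).
  suff -> : - (val mX - val mY) = val y by apply: valP.
  move: ey; change (0 - val mX = val y - val mY -> - (val mX - val mY) = val y).
  move=> ey; apply/eqP; rewrite -(subrK (val mY) (val y)) -ey; apply/eqP; ring.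
have eXY : val mX = val mY by apply/eqP; rewrite -subr_eq0 c0.
apply: pred_ext => z; split.
  move/h1=> [y Yy]; rewrite eXY => /addIr/val_inj ->; exact: Yy.
move/h2=> [y Yy]; rewrite eXY => /addIr/val_inj ->; exact: Yy.
Qed.

Lemma minP_ex (Y : HQ -> Prop) : Pfin1 Y -> exists m, minP Y m.
Proof. exact: (@min_exists Q Q0 QD P P0 PD Ptot). Qed.

Lemma Fm_surj Y : Pfin1 Y -> exists2 X, Pfin1 X & Fm X = Y.
Proof.
move=> hY; have [mP [YmP hmP]] := minP_ex hY; case: (hY) => fY Y1.
pose X := fun x : HP => exists y, Y y /\ val x = val y - val mP.
have x0P : P (0 - val mP) := hmP _ Y1.
pose x0 : HP := exist (fun p => P p) _ x0P.
have Xx0 : X x0 by exists (munit HQ).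
have hm0 : minQ X x0.
  split => // z [y [Yy ez]]; rewrite ez /=.
  have -> : val y - val mP - (0 - val mP) = val y by ring.
  exact: valP.
exists X.
  split => //; first by apply: (fin_shift (c := val mP) fY).
  by exists mP; split => //; rewrite subrr.
apply: pred_ext => q; split.
  case=> x [m [[y [Yy ex]] hm eq]].
  have em := minQ_uniq hm hm0; subst m.
  suff -> : q = y by [].
  apply: val_inj; rewrite eq ex /=; ring.
move=> Yq.
have xP : P (val q - val mP) := hmP _ Yq.
exists (exist (fun p => P p) _ xP), x0; split => //; first by exists q.
rewrite /=; ring.
Qed.

Lemma Fm_hom X Y : Pfin1 X -> Pfin1 Y -> Fm (setop X Y) = setop (Fm X) (Fm Y).
Proof.
move=> hX hY.
have [mX hmX] := minQ_ex hX; have [mY hmY] := minQ_ex hY.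
have hmXY := min_setop QD hmX hmY.
apply: pred_ext => q; split.
  case=> w [m [[x [y [Xx Yy ->]]] hm eq]].
  have em := minQ_uniq hm hmXY; subst m.
  have aP : Q (val x - val mX) by case: hmX => _; apply.
  have bP : Q (val y - val mY) by case: hmY => _; apply.
  exists (exist (fun p => Q p) _ aP), (exist (fun p => Q p) _ bP); split.
  - by exists x, mX.
  - by exists y, mY.
  apply: val_inj; rewrite eq.
  change (val x + val y - (val mX + val mY) = (val x - val mX) + (val y - val mY)); ring.
case=> a [b [[x [m1 [Xx hm1 ea]]] [y [m2 [Yy hm2 eb]]] ->]].
exists (mop x y), (mop m1 m2); split.
- by exists x, y.
- by have := min_setop QD hm1 hm2.
change (val a + val b = (val x + val y) - (val m1 + val m2)); rewrite ea eb; ring.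
Qed.

Lemma cone_Pfin1_iso : Pfin1_iso HP HQ.
Proof.
exists Fm; split.
- exact: Fm_Pfin.
- exact: Fm_inj.
- exact: Fm_surj.
- exact: Fm_hom.
Qed.

End Iso.
Lemma H1tot g : H1pred g \/ H1pred (- g).
Proof. case: g => x y; rewrite /H1pred /=.
case: (boolP (0 < y)) => hy; first by left.
case: (boolP (y < 0)) => hy'; first by right; lia.
case: (boolP (0 <= x)) => hx; [left|right]; lia.
Qed.
Lemma H1asym g : H1pred g -> H1pred (- g) -> g = 0.
Proof. case: g => x y; rewrite /H1pred /= => h h'.
apply/eqP; rewrite xpair_eqE; apply/andP; split; apply/eqP; lia.
Qed.

Lemma intrMn' (R : realType) (z : int) (n : nat) : (z *+ n)%:~R = z%:~R *+ n :> R.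
Proof. elim: n => [|n IH]; first by rewrite !mulr0n mulr0z.
by rewrite !mulrS intrD IH. Qed.

Section H2.
Variables (R : realType) (alpha : R).
Hypothesis irr : irrational alpha.

Lemma irr_key (x y : int) : y%:~R = alpha * x%:~R -> x = 0 /\ y = 0.
Proof.
move=> e; have [x0|x0] := eqVneq x 0.
  by move: e; rewrite x0 mulr0 => /eqP; rewrite intr_eq0 => /eqP.
exfalso; apply: irr; exists (y%:~R / x%:~R : rat) => //.
rewrite fmorph_div /= !ratr_int e mulfK //.
by rewrite intr_eq0.
Qed.

Lemma H2tot g : H2pred alpha g \/ H2pred alpha (- g).
Proof.
case: g => x y; rewrite /H2pred /= !intrN mulrN lerN2.
by case/orP: (le_total (y%:~R) (alpha * x%:~R)) => h; [left|right].
Qed.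

Lemma H2asym g : H2pred alpha g -> H2pred alpha (- g) -> g = 0.
Proof.
case: g => x y; rewrite /H2pred /= !intrN mulrN lerN2 => h h'.
have [-> ->] := irr_key (esym (le_anti (introT andP (conj h' h)))).
by [].
Qed.

Lemma not_iso : ~ monoid_iso H1ex (H2ex alpha).
Proof.
case=> f [[g fK gK] fM].
have fu : f (munit H1ex) = munit (H2ex alpha).
  apply: val_inj; have := congr1 val (fM (munit H1ex) (munit H1ex)).
  have -> : mop (munit H1ex) (munit H1ex) = munit H1ex by apply: val_inj.
  change (val (f (munit H1ex)) = val (f (munit H1ex)) + val (f (munit H1ex)) ->
          val (f (munit H1ex)) = 0).
  by move=> h; apply: (addrI (val (f (munit H1ex)))); rewrite addr0 -h.
have aP : H1pred (1, 0) by [].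
have bP : H1pred (0, 1) by [].
pose a : H1ex := exist (fun p => H1pred p) _ aP.
pose b : H1ex := exist (fun p => H1pred p) _ bP.
have ekP : forall k : nat, H1pred (k%:Z, 0) by move=> k; rewrite /H1pred /=; lia.
pose ek (k : nat) : H1ex := exist (fun p => H1pred p) _ (ekP k).
case E : (val (f a)) => [x y].
case E' : (val (f b)) => [x' y'].
have hd : 0 <= alpha * x%:~R - y%:~R.
  by have := valP (f a); rewrite E /H2pred /= subr_ge0.
have he : 0 <= alpha * x'%:~R - y'%:~R.
  by have := valP (f b); rewrite E' /H2pred /= subr_ge0.
have dn0 : alpha * x%:~R - y%:~R != 0.
  apply/negP => /eqP /eqP; rewrite subr_eq0 => /eqP /esym /irr_key [x0 y0].
  have : f a = f (munit H1ex) by rewrite fu; apply: val_inj; rewrite E x0 y0.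
  by move/(congr1 g); rewrite !fK => /(congr1 val).
have dp : 0 < alpha * x%:~R - y%:~R by rewrite lt_def dn0 hd.
set d := alpha * x%:~R - y%:~R in hd dn0 dp.
set e := alpha * x'%:~R - y'%:~R in he.
have ed0 : 0 <= e / d by rewrite divr_ge0 // ltW.
set n := Num.Def.archi_bound (e / d).
have hn : e < n%:R * d.
  by have := archi_boundP ed0; rewrite ltr_pdivrMr // mulrC.
have fek : forall k, val (f (ek k)) = (x *+ k, y *+ k).
  elim=> [|k IH].
    have -> : ek 0%N = munit H1ex by apply: val_inj.
    by rewrite fu.
  have -> : ek k.+1 = mop a (ek k).
    apply: val_inj; rewrite /= /addp /=; congr (_, _); try lia.
  rewrite fM; change (val (f a) + val (f (ek k)) = (x *+ k.+1, y *+ k.+1)).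
  by rewrite E IH /= !mulrS.
have cP : H2pred alpha (x *+ n - x', y *+ n - y').
  rewrite /H2pred /= !intrB !intrMn' -subr_ge0.
  have -> : alpha * (x%:~R *+ n - x'%:~R) - (y%:~R *+ n - y'%:~R) = n%:R * d - e.
    by rewrite /d /e; ring.
  by rewrite subr_ge0 ltW.
pose c : H2ex alpha := exist (fun p => H2pred alpha p) _ cP.
have : f (mop b (g c)) = f (ek n).
  apply: val_inj; rewrite fM gK fek.
  change (val (f b) + (x *+ n - x', y *+ n - y') = (x *+ n, y *+ n)).
  by rewrite E'; change ((x' + (x *+ n - x'), y' + (y *+ n - y')) = (x *+ n, y *+ n)); congr (_, _); rewrite addrC subrK.
move/(congr1 g); rewrite !fK => /(congr1 val).
rewrite /= /addp /= => -[_ h2].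
move: h2; case: (g c) => [[p1 p2] hp] /= h2; move: hp; rewrite /H1pred /=; lia.
Qed.
End H2.

Lemma witness_gen (R : realType) (alpha : R) : irrational alpha -> witness_pair H1ex (H2ex alpha).
Proof.
move=> irr.
have Ht := H1tot; have Ha := H1asym; have Qt := H2tot alpha; have Qa := H2asym irr.
split; first exact: cone_cancel.
split; first exact: cone_cancel.
split; first exact: cone_valuation.
split; first exact: cone_valuation.
split; first exact: cone_reduced.
split; first exact: cone_reduced.
split; first exact: not_iso.
exact: cone_Pfin1_iso.
Qed.

Unset Implicit Arguments.

Theorem corollary3 :
  (exists H1 H2 : cmonoid, witness_pair H1 H2) /\
  (forall (R : realType) (alpha : R), 0 < alpha -> irrational alpha ->
     witness_pair H1ex (H2ex alpha)).
Proof.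
split.
  exists H1ex, (H2ex (trigo.pi : Rdefinitions.R)).
  apply: witness_gen; exact: mathcomp.analysis.pi_irrational.pi_irrationnal.
by move=> R alpha _; exact: witness_gen.
Qed.
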